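(* Let $\mathcal G$ be a connected signed graph with normalized signed Laplacian $\mathcal L$. If $\mathcal G$ is structurally unbalanced, then $\lambda_2(\mathcal L)<1$.
   Context: Let $\mathcal G$ be an undirected, connected signed graph on $n$ nodes without self-loops, with symmetric adjacency matrix $A=[a_{ij}]$ having zero diagonal and entries of either sign, where $a_{ij}\ne0$ iff $\{i,j\}$ is an edge. Let $\delta_i=\sum_j|a_{ij}|>0$ and $\Delta=\mathrm{diag}(\delta_i)$. The normalized signed Laplacian is $\mathcal L=I-\Delta^{-1}A$; its eigenvalues are real and ordered $\lambda_1(\mathcal L)\le\dots\le\lambda_n(\mathcal L)$. $\mathcal G$ is structurally balanced if there is a signature matrix $S=\mathrm{diag}(s_i)$, $s_i=\pm1$, such that $SAS$ is entrywise nonnegative; otherwise it is structurally unbalanced. *)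

(* Defs.v *)
From HB Require Import structures.
From mathcomp Require Import all_boot all_order all_algebra.
From mathcomp Require Import reals.
Set Implicit Arguments. Unset Strict Implicit. Unset Printing Implicit Defensive.
Import Order.TTheory GRing.Theory Num.Theory.
Local Open Scope ring_scope.

Section SignedGraph.
Variables (R : realType) (n : nat).

Definition sdeg (A : 'M[R]_n) (i : 'I_n) : R := \sum_j `|A i j|.

Definition sDelta (A : 'M[R]_n) : 'M[R]_n := diag_mx (\row_i sdeg A i).

Definition norm_signed_laplacian (A : 'M[R]_n) : 'M[R]_n :=
  1%:M - invmx (sDelta A) *m A.

Definition sg_connected (A : 'M[R]_n) : Prop :=
  forall i j : 'I_n, connect (fun k l => A k l != 0) i j.

Definition signature_mx (S : 'M[R]_n) : Prop :=
  exists s : 'I_n -> bool, S = diag_mx (\row_i (-1) ^+ s i).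

Definition struct_balanced (A : 'M[R]_n) : Prop :=
  exists S : 'M[R]_n, signature_mx S /\ forall i j, 0 <= (S *m A *m S) i j.

(* s is the list of eigenvalues of M (with algebraic multiplicity),
   ordered increasingly: s`_0 = lambda_1 <= s`_1 = lambda_2 <= ... *)
Definition sorted_spectrum (M : 'M[R]_n) (s : seq R) : Prop :=
  sorted <=%R s /\ char_poly M = \prod_(x <- s) ('X - x%:P).

End SignedGraph.

(* Main.v *)
Require Import Defs.
From HB Require Import structures.
From mathcomp Require Import all_boot all_order all_algebra.
From mathcomp Require Import reals.
From mathcomp Require Import complex spectral sesquilinear mxred ring lra.
Import Order.TTheory GRing.Theory Num.Theory.
Local Open Scope ring_scope.

Lemma char_poly_conj (F : fieldType) n (P Q A : 'M[F]_n) :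
  P \in unitmx -> P *m Q = A *m P -> char_poly Q = char_poly A.
Proof.
move=> Pu PQ.
have E : map_mx polyC P *m char_poly_mx Q = char_poly_mx A *m map_mx polyC P.
  rewrite /char_poly_mx mulmxBr mulmxBl mul_mx_scalar mul_scalar_mx.
  by rewrite -!map_mxM PQ.
have := congr1 determinant E; rewrite !det_mulmx det_map_mx mulrC.
move/mulIf; apply; rewrite polyC_eq0 -unitfE -unitmxE //.
Qed.

Lemma char_poly_diag (F : comNzRingType) n (d : 'rV[F]_n) :
  char_poly (diag_mx d) = \prod_(i < n) ('X - (d 0 i)%:P).
Proof.
rewrite char_poly_trig ?diag_mx_is_trig //.
by apply: eq_bigr => i _; rewrite mxE eqxx mulr1n.
Qed.

Lemma quad_delta (R : comNzRingType) n (B : 'M[R]_n) i j a b :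
  let y := a *: delta_mx 0 i + b *: delta_mx 0 j : 'rV[R]_n in
  (y *m B *m y^T) 0 0 = a*a*B i i + a*b*B i j + b*a*B j i + b*b*B j j.
Proof.
have D k l : ((delta_mx 0 k : 'rV_n) *m B *m (delta_mx 0 l : 'rV_n)^T) 0 0 = B k l.
  by rewrite trmx_delta -rowE -colE !mxE.
have E1 (M N : 'M[R]_1) : (M + N) 0 0 = M 0 0 + N 0 0 by rewrite mxE.
have E2 c (M : 'M[R]_1) : (c *: M) 0 0 = c * M 0 0 by rewrite mxE.
move=> y; rewrite /y linearD /= !linearZ /= !mulmxDl !mulmxDr.
rewrite -!scalemxAl -!scalemxAr !addrA !E1 !E2 !D.
ring.
Qed.

Lemma lin_delta (R : comNzRingType) n (s : 'rV[R]_n) i j a b :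
  let y := a *: delta_mx 0 i + b *: delta_mx 0 j : 'rV[R]_n in
  (s *m y^T) 0 0 = a * s 0 i + b * s 0 j.
Proof.
have D k : (s *m (delta_mx 0 k : 'rV_n)^T) 0 0 = s 0 k.
  by rewrite trmx_delta -colE !mxE.
have E1 (M N : 'M[R]_1) : (M + N) 0 0 = M 0 0 + N 0 0 by rewrite mxE.
have E2 c (M : 'M[R]_1) : (c *: M) 0 0 = c * M 0 0 by rewrite mxE.
move=> y; rewrite /y linearD /= !linearZ /= !mulmxDr.
by rewrite -!scalemxAr !E1 !E2 !D.
Qed.

Lemma sgn_mul (R : realDomainType) (x : R) : (-1) ^+ (x < 0)%R * x = `|x|.
Proof.
case: (ltrP x 0) => hx /=.
  by rewrite expr1 mulN1r ltr0_norm.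
by rewrite expr0 mul1r ger0_norm.
Qed.

Lemma balanced_of_bound (R : realType) n (A : 'M[R]_n) (e : 'I_n -> R) (c : R)
  (s : 'rV[R]_n) :
  A^T = A -> (forall i, A i i = 0) -> (forall i, 0 < e i) ->
  (forall y : 'rV[R]_n,
     (y *m (\matrix_(i, j) (A i j / (e i * e j))) *m y^T) 0 0
       <= c * ((s *m y^T) 0 0) ^+ 2) ->
  struct_balanced A.
Proof.
move=> Asym Adiag epos Hb.
have Asy i j : A j i = A i j by rewrite -[in LHS]Asym mxE.
pose w i := e i * s 0 i.
have key i j t : i != j -> 2 * t * A i j <= c * (w i + t * w j) ^+ 2.
  move=> ij; have := Hb (e i *: delta_mx 0 i + (t * e j) *: delta_mx 0 j).
  rewrite quad_delta lin_delta !mxE Adiag Adiag (Asy i j).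
  have ei := epos i; have ej := epos j.
  have ei0 : e i != 0 by rewrite gt_eqF.
  have ej0 : e j != 0 by rewrite gt_eqF.
  suff -> : e i * e i * (0 / (e i * e i)) + e i * (t * e j) * (A i j / (e i * e j)) +
   t * e j * e i * (A i j / (e j * e i)) + t * e j * (t * e j) * (0 / (e j * e j))
   = 2 * t * A i j.
    by rewrite /w; congr (_ <= _ * _ ^+ 2); ring.
  by field; rewrite ei0 ej0.
have c1 i j : A i j != 0 -> w j != 0.
  move=> Aij; apply/negP => /eqP wj0.
  have ij : i != j by apply: contraNneq Aij => ->; rewrite Adiag.
  have := key i j ((c * w i ^+ 2 + 1) / (2 * A i j)) ij.
  rewrite wj0 mulr0 addr0.
  have -> : 2 * ((c * w i ^+ 2 + 1) / (2 * A i j)) * A i j = c * w i ^+ 2 + 1.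
    by field.
  by move=> H; move: H; clear; move: (c * w i ^+ 2) => x; lra.
have c2 i j : A i j != 0 -> 0 <= A i j * w i * w j.
  move=> Aij.
  have ij : i != j by apply: contraNneq Aij => ->; rewrite Adiag.
  have wj0 := c1 i j Aij.
  have := key i j (- w i / w j) ij.
  have -> : w i + - w i / w j * w j = 0 by field.
  rewrite expr0n /= mulr0.
  move=> H.
  have H2 : 0 <= - (2 * (- w i / w j) * A i j) by rewrite oppr_ge0.
  have wj2 : 0 < w j ^+ 2 by rewrite exprn_even_gt0.
  have := mulr_ge0 H2 (ltW wj2).
  have -> : - (2 * (- w i / w j) * A i j) * w j ^+ 2 = 2 * (A i j * w i * w j).
    by field.
  by rewrite pmulr_rge0 // ltr0n.
exists (diag_mx (\row_i (-1) ^+ (w i < 0)%R)); split.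
  by exists (fun i => (w i < 0)%R).
move=> i j; rewrite mul_mx_diag mul_diag_mx !mxE.
have [->|Aij] := eqVneq (A i j) 0; first by rewrite mulr0 mul0r.
have wi0 : w i != 0 by apply: (c1 j i); rewrite Asy.
have wj0 := c1 i j Aij.
have H := c2 i j Aij.
have pos : 0 < `|w i| * `|w j| by rewrite mulr_gt0 // normr_gt0.
rewrite -(pmulr_lge0 _ pos) -!sgn_mul.
have -> : (-1) ^+ (w i < 0)%R * A i j * (-1) ^+ (w j < 0)%R *
  ((-1) ^+ (w i < 0)%R * w i * ((-1) ^+ (w j < 0)%R * w j)) =
  ((-1) ^+ (w i < 0)%R * (-1) ^+ (w i < 0)%R) * ((-1) ^+ (w j < 0)%R * (-1) ^+ (w j < 0)%R) * (A i j * w i * w j) by ring.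
by case: (w i < 0)%R; case: (w j < 0)%R; rewrite /= ?expr0 ?expr1 ?mulN1r ?opprK ?mul1r.
Qed.

Lemma card_count n (a : pred 'I_n) : #|a| = count a (enum 'I_n).
Proof.
rewrite cardE -size_filter; congr size.
by rewrite /enum_mem -filter_predI; apply: eq_filter => x; rewrite /= andbT.
Qed.

Lemma spectral_bound {R : realType} {n} (M : 'M[R]_n) : M^T = M ->
  exists r : 'I_n -> R, char_poly M = \prod_(i < n) ('X - (r i)%:P) /\
   ((forall k k', r k < 1 -> r k' < 1 -> k = k') ->
    exists (c : R) (s : 'rV[R]_n), forall y : 'rV[R]_n,
      (y *m (1%:M - M) *m y^T) 0 0 <= c * ((s *m y^T) 0 0) ^+ 2).
Proof.
move=> Msym.
have Msy i j : M j i = M i j by rewrite -[in LHS]Msym mxE.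
pose rc := real_complex R.
have Rrc x : rc x \is Num.real by apply/complex_realP; exists x.
have crc x : (rc x)^* = rc x by rewrite conj_Creal.
pose Mc := map_mx rc M.
have herm : Mc \is hermsymmx.
  apply/is_hermitianmxP; rewrite expr0 scale1r.
  by apply/matrixP => i j; rewrite !mxE crc Msy.
pose P := spectralmx Mc; pose d := spectral_diag Mc.
have Meq : Mc = invmx P *m diag_mx d *m P.
  exact/orthomx_spectralP/hermitian_normalmx.
have Pun : P \is unitarymx by apply: spectral_unitarymx.
have Pu : P \in unitmx by apply: unitarymx_unit.
have dreal k : d 0 k \is Num.real.
  by have /mxOverP := hermitian_spectral_diag_real herm; apply.
pose r k := complex.Re (d 0 k).
have hd k : rc (r k) = d 0 k by rewrite /rc /r RRe_real.
have cpM : char_poly M = \prod_(i < n) ('X - (r i)%:P).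
  apply: (@map_poly_inj _ _ rc).
  rewrite map_char_poly -/Mc.
  rewrite (@char_poly_conj _ _ P _ (diag_mx d) Pu); last first.
    by rewrite Meq !mulmxA mulmxV // mul1mx.
  rewrite char_poly_diag rmorph_prod; apply: eq_bigr => i _.
  by rewrite rmorphB /= map_polyX map_polyC /= -hd.
exists r; split => //.
move=> uniq.
pose d' := \row_k (1 - d 0 k).
have Heq1 : 1%:M - Mc = invmx P *m diag_mx d' *m P.
  have -> : diag_mx d' = 1%:M - diag_mx d.
    by apply/matrixP => i j; rewrite !mxE; case: eqP => _; rewrite ?mulr1n ?mulr0n ?subr0.
  by rewrite Meq mulmxBr mulmxBl mulmx1 mulVmx.
pose z (y : 'rV[R]_n) k := \sum_j rc (y 0 j) * (P k j)^*.
have Hq y : rc ((y *m (1%:M - M) *m y^T) 0 0) = \sum_k z y k * (1 - d 0 k) * (z y k)^*.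
  have E : map_mx rc (y *m (1%:M - M) *m y^T) = map_mx rc y *m (1%:M - Mc) *m (map_mx rc y)^T.
    by rewrite !map_mxM map_mxB map_mx1 map_trmx.
  have := congr1 (fun X : 'M[R[i]]_1 => X 0 0) E; rewrite mxE => ->.
  rewrite Heq1 !mulmxA -(mulmxA _ P) mul_mx_diag invmx_unitary //.
  rewrite mxE; apply: eq_bigr => k _; rewrite !mxE.
  congr (_ * _ * _); first by apply: eq_bigr => j _; rewrite !mxE.
  rewrite /z rmorph_sum; apply: eq_bigr => j _.
  by rewrite !mxE rmorphM /= crc conjCK mulrC.
have rcle a b : (rc a <= rc b) = (a <= b) by apply: lecR.
have tle y k : 1 <= r k -> z y k * (1 - d 0 k) * (z y k)^* <= 0.
  move=> rk; rewrite -hd mulrAC mulrC.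
  apply: mulr_le0_ge0; last exact: mul_conjC_ge0.
  by rewrite -(rmorph1 rc) -rmorphB -(rmorph0 rc) rcle subr_le0.
case: (pickP (fun k => r k < 1)) => [k0 hk0 | none]; last first.
  exists 0, 0 => y; rewrite mul0r -rcle.
  have -> : rc 0 = 0 by rewrite /rc rmorph0.
  rewrite Hq.
  by apply: sumr_le0 => k _; apply: tle; rewrite leNgt none.
have oth k : k != k0 -> 1 <= r k.
  move=> kk0; rewrite leNgt; apply/negP => rk.
  by move/eqP: kk0; apply; apply: uniq.
have ev : eigenvalue M (r k0).
  by rewrite eigenvalue_root_char cpM (bigD1 k0) //= rootM root_XsubC eqxx.
have [v vM vn0] := eigenvalueP ev.
pose vc := map_mx rc v.
have vcM : vc *m Mc = d 0 k0 *: vc by rewrite -hd -map_mxM vM map_mxZ.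
have vcdef : vc = map_mx rc v by [].
clearbody vc.
pose t := vc *m invmx P.
have tD : t *m diag_mx d = d 0 k0 *: t.
  have E : invmx P *m diag_mx d = Mc *m invmx P by rewrite Meq mulmxK.
  by rewrite /t -mulmxA E mulmxA vcM scalemxAl.
have tP : vc = t *m P by rewrite /t mulmxKV.
clearbody t.
have t0 k : k != k0 -> t 0 k = 0.
  move=> kk0; have := congr1 (fun X : 'M[R[i]]_(1, n) => X 0 k) tD.
  rewrite mul_mx_diag !mxE => h.
  have dne : d 0 k - d 0 k0 != 0.
    rewrite subr_eq0 -hd -hd; apply/negP => /eqP /(congr1 (@complex.Re R)) /= e.
    by have := oth k kk0; rewrite e leNgt hk0.
  have : t 0 k * (d 0 k - d 0 k0) == 0 by rewrite mulrBr h mulrC subrr.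
  by rewrite mulf_eq0 (negPf dne) orbF => /eqP.
pose al := t 0 k0.
have vcE j : vc 0 j = al * P k0 j.
  move: tP => /(congr1 (fun X : 'M[R[i]]_(1, n) => X 0 j)); rewrite mxE => ->.
  rewrite (bigD1 k0) //= big1 ?addr0 // => k kk0.
  by rewrite t0 // mul0r.
have al0 : al != 0.
  apply/negP => /eqP al0; move: vn0; rewrite -(map_mx_eq0 rc) -vcdef; apply/negP/negPn.
  by apply/eqP/matrixP => i j; rewrite (ord1 i) vcE al0 mul0r !mxE.
have alc0 : al^* != 0 by rewrite conjC_eq0.
pose N := complex.Re (al * al^*).
have hN : rc N = al * al^* by rewrite /rc /N RRe_real // ger0_real // mul_conjC_ge0.
exists ((1 - r k0) / N), v => y.
rewrite -rcle Hq (bigD1 k0) //=.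
apply: ler_wnDr; first by apply: sumr_le0 => k kk0; apply: tle; apply: oth.
have zE : z y k0 = rc ((v *m y^T) 0 0) / al^*.
  rewrite /z mxE.
  have -> : rc (\sum_j v 0 j * y^T j 0) = \sum_j rc (v 0 j * y^T j 0) by apply: rmorph_sum.
  rewrite mulr_suml; apply: eq_bigr => j _.
  have : (rc (v 0 j))^* = al^* * (P k0 j)^* by rewrite -rmorphM -vcE vcdef mxE.
  rewrite crc => h.
  have -> : rc (v 0 j * y^T j 0) = rc (v 0 j) * rc (y 0 j) by rewrite mxE; apply: rmorphM.
  rewrite h; field.
  by rewrite alc0.
rewrite zE -hd.
set L := (v *m y^T) 0 0.
have e1 : rc ((1 - r k0) / N * L ^+ 2) = (1 - rc (r k0)) * (rc N)^-1 * rc L ^+ 2.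
  by rewrite /rc !rmorphM fmorphV rmorphB rmorph1 expr2.
have e2 : (rc L / al^*)^* = rc L / al.
  by rewrite rmorphM fmorphV /= crc conjCK.
rewrite e1 e2 hN.
rewrite le_eqVlt; apply/orP; left; apply/eqP.
field.
by rewrite al0 alc0.
Qed.


Lemma count_sorted (R : realType) (s : seq R) : sorted <=%R s -> 1 <= s`_1 ->
  (count (fun x => (x < 1)%R) s <= 1)%N.
Proof.
case: s => [|a [|b t]]; first by [].
  by move=> _ _ /=; rewrite addn0 leq_b1.
move=> /= /andP[ab pt] b1.
have := order_path_min le_trans pt => /allP Ht.
have -> : (b < 1)%R = false by rewrite ltNge b1.
have -> : count (fun x => x < 1) t = 0%N.
  apply/eqP; rewrite -leqn0 leqNgt -has_count; apply/hasPn => x /Ht bx.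
  by rewrite -leNgt (le_trans b1 bx).
by rewrite add0n addn0 leq_b1.
Qed.

Theorem lemma2 (R : realType) (n : nat) (A : 'M[R]_n)
  (Asym : A^T = A)
  (Adiag : forall i, A i i = 0)
  (Adeg : forall i, 0 < sdeg A i)
  (Aconn : sg_connected A)
  (Aunbal : ~ struct_balanced A) :
  exists s : seq R,
    sorted_spectrum (norm_signed_laplacian A) s /\ s`_1 < 1.
Proof.
have Asy i j : A j i = A i j by rewrite -[in LHS]Asym mxE.
pose e i := Num.sqrt (sdeg A i).
have epos i : 0 < e i by rewrite sqrtr_gt0.
have e0 i : e i != 0 by rewrite gt_eqF.
have ee i : e i * e i = sdeg A i by rewrite -expr2 sqr_sqrtr // ltW.
pose B := \matrix_(i, j) (A i j / (e i * e j)) : 'M[R]_n.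
pose M := 1%:M - B.
have Msym : M^T = M.
  by apply/matrixP => i j; rewrite !mxE Asy eq_sym [e j * _]mulrC.
have [r [cpM Hb]] := @spectral_bound R n M Msym.
pose P := diag_mx (\row_i e i).
pose Pi := diag_mx (\row_i (e i)^-1).
have PPi : P *m Pi = 1%:M.
  apply/matrixP => i j; rewrite mul_diag_mx !mxE.
  by case: eqP => [->|_]; rewrite ?mulr1n ?mulr0n ?mulr0 // divff.
have Pu : P \in unitmx by case: (mulmx1_unit PPi).
pose Dl := diag_mx (\row_i (sdeg A i)^-1).
have DDl : sDelta A *m Dl = 1%:M.
  apply/matrixP => i j; rewrite mul_diag_mx !mxE.
  by case: eqP => [->|_]; rewrite ?mulr1n ?mulr0n ?mulr0 // divff // gt_eqF.
have Du : sDelta A \in unitmx by case: (mulmx1_unit DDl).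
have invD : invmx (sDelta A) = Dl by rewrite -[RHS](mulKmx Du) DDl mulmx1.
have cpL : char_poly (norm_signed_laplacian A) = char_poly M.
  apply: (@char_poly_conj _ _ P _ _ Pu).
  rewrite /norm_signed_laplacian /M invD mulmxBr mulmxBl mulmx1 mul1mx.
  congr (_ - _).
  apply/matrixP => i j.
  rewrite !mul_diag_mx mul_mx_diag !mxE.
  rewrite -(ee i); field.
  by rewrite !e0.
have pS : perm_eq (sort <=%R [seq r i | i <- enum 'I_n]) [seq r i | i <- enum 'I_n].
  by rewrite perm_sort.
exists (sort <=%R [seq r i | i <- enum 'I_n]).
split.
  split; first exact: sort_le_sorted.
  rewrite cpL cpM (perm_big _ pS) big_map big_enum /=.
  by apply: eq_bigl => i; rewrite inE.
rewrite ltNge; apply/negP => H1; apply: Aunbal.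
have := @count_sorted R _ (sort_le_sorted _) H1.
rewrite (permP pS) count_map -card_count => /card_le1_eqP Hc.
have [|c [s Hs]] := Hb.
  by move=> k k' rk rk'; have := Hc k k' rk rk'.
apply: (@balanced_of_bound R n A e c s Asym Adiag epos) => y.
by have := Hs y; rewrite /M opprB addrC subrK.
Qed.
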